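(* For every finite simple graph $G$, $\vartheta(G)=\alpha_{\mathcal S}(G)$.
   Context: $G$ has vertex set $\{1,\dots,n\}$. A weighted adjacency matrix of $G$ is a real symmetric $n\times n$ matrix $A$ with $A_{ii}=0$ and $A_{ij}=0$ whenever $i\ne j$ are non-adjacent. $\vartheta(G)=\inf_B\lambda_{\max}(B)$ over real symmetric $B$ with $B_{ij}=1$ whenever $i=j$ or $i,j$ non-adjacent (the Lovász theta function). With $\boldsymbol 1$ the all-ones vector and $\mathcal S_n=\{\boldsymbol v\in\mathbb R^n:\langle\boldsymbol 1,\boldsymbol v\rangle=|\boldsymbol v|^2\}$, the spherical independence number is $\alpha_{\mathcal S}(G)=\inf_A\sup\{|\boldsymbol v|^2:\boldsymbol v\in\mathcal S_n,\ \langle\boldsymbol v,A\boldsymbol v\rangle=0\}$, the infimum over all weighted adjacency matrices $A$ of $G$. *)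

(* Defs.v *)
From HB Require Import structures.
From mathcomp Require Import all_boot all_order all_algebra.
From mathcomp Require Import all_classical all_reals.
Set Implicit Arguments. Unset Strict Implicit. Unset Printing Implicit Defensive.
Import Order.TTheory GRing.Theory Num.Theory.
Local Open Scope ring_scope.
Local Open Scope classical_set_scope.

Section Defs.
Variable R : realType.

Definition simple_graph (n : nat) (adj : rel 'I_n) : Prop :=
  (forall i, ~~ adj i i) /\ (forall i j, adj i j = adj j i).

Definition symmetric_mx (n : nat) (M : 'M[R]_n) : Prop := M^T = M.

Definition weighted_adj (n : nat) (adj : rel 'I_n) (A : 'M[R]_n) : Prop :=
  symmetric_mx A /\ (forall i, A i i = 0) /\
  (forall i j, i != j -> ~~ adj i j -> A i j = 0).

Definition lambda_max (n : nat) (B : 'M[R]_n) : R :=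
  sup [set a : R | eigenvalue B a].

Definition theta_admissible (n : nat) (adj : rel 'I_n) (B : 'M[R]_n) : Prop :=
  symmetric_mx B /\ (forall i j, (i == j) || ~~ adj i j -> B i j = 1).

Definition lovasz_theta (n : nat) (adj : rel 'I_n) : R :=
  inf [set lambda_max B | B in [set B : 'M[R]_n | theta_admissible adj B]].

Definition ones_dot (n : nat) (v : 'cV[R]_n) : R := \sum_i v i 0.
Definition sqnorm (n : nat) (v : 'cV[R]_n) : R := \sum_i v i 0 ^+ 2.
Definition quad_form (n : nat) (A : 'M[R]_n) (v : 'cV[R]_n) : R :=
  (v^T *m A *m v) 0 0.

Definition sphereS (n : nat) : set 'cV[R]_n :=
  [set v | ones_dot v = sqnorm v].

Definition sph_value (n : nat) (A : 'M[R]_n) : R :=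
  sup [set sqnorm v | v in [set v | @sphereS n v /\ quad_form A v = 0]].

Definition spherical_indep (n : nat) (adj : rel 'I_n) : R :=
  inf [set sph_value A | A in [set A : 'M[R]_n | weighted_adj adj A]].

End Defs.

(* Main.v *)
Require Import Defs.
From mathcomp Require Import all_boot all_order all_algebra.
From mathcomp Require Import all_classical all_reals.
From mathcomp Require Import ring lra.
Import Order.TTheory GRing.Theory Num.Theory.
Local Open Scope ring_scope.
Local Open Scope classical_set_scope.
Set Implicit Arguments. Unset Strict Implicit. Unset Printing Implicit Defensive.

Section Alg.
Variable R : realType.
Variable n : nat.
Implicit Types (A B : 'M[R]_n) (x y : 'cV[R]_n).

Definition bil A x y : R := (x^T *m A *m y) 0 0.

Lemma quad_bil A x : quad_form A x = bil A x x. Proof. by []. Qed.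

Lemma bilE A x y : bil A x y = \sum_i \sum_j x i 0 * A i j * y j 0.
Proof.
rewrite /bil mxE exchange_big /=; apply: eq_bigr => j _.
rewrite mxE mulr_suml; apply: eq_bigr => i _; by rewrite !mxE.
Qed.

Lemma bilDl A x y z : bil A (x + y) z = bil A x z + bil A y z.
Proof. by rewrite /bil linearD /= !mulmxDl mxE. Qed.
Lemma bilDr A x y z : bil A z (x + y) = bil A z x + bil A z y.
Proof. by rewrite /bil mulmxDr mxE. Qed.
Lemma bilZl A a x y : bil A (a *: x) y = a * bil A x y.
Proof. by rewrite /bil linearZ /= -!scalemxAl mxE. Qed.
Lemma bilZr A a x y : bil A x (a *: y) = a * bil A x y.
Proof. by rewrite /bil -!scalemxAr mxE. Qed.
Lemma bilMD A B x y : bil (A + B) x y = bil A x y + bil B x y.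
Proof. by rewrite /bil mulmxDr mulmxDl mxE. Qed.
Lemma bilMZ a A x y : bil (a *: A) x y = a * bil A x y.
Proof. by rewrite /bil -scalemxAr -scalemxAl mxE. Qed.
Lemma bilMN A x y : bil (- A) x y = - bil A x y.
Proof. by rewrite -scaleN1r bilMZ mulN1r. Qed.
Lemma bil_sym A x y : A^T = A -> bil A y x = bil A x y.
Proof.
move=> sA; rewrite /bil.
have h (M : 'M[R]_1) : M 0 0 = M^T 0 0 by rewrite mxE.
rewrite h.
by rewrite !trmx_mul trmxK sA mulmxA.
Qed.

Definition dotv x y : R := \sum_i x i 0 * y i 0.

Lemma bil1 x y : bil 1%:M x y = dotv x y.
Proof.
by rewrite /bil mulmx1 mxE; apply: eq_bigr => i _; rewrite mxE.
Qed.

Lemma sqnorm_dot x : sqnorm x = dotv x x.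
Proof. by rewrite /sqnorm /dotv; apply: eq_bigr => i _; rewrite expr2. Qed.

Lemma quad_scalar a x : quad_form a%:M x = a * sqnorm x.
Proof. by rewrite quad_bil -scalemx1 bilMZ bil1 sqnorm_dot. Qed.

Lemma bilJ x y : bil (const_mx 1) x y = ones_dot x * ones_dot y.
Proof.
rewrite bilE /ones_dot mulr_suml; apply: eq_bigr => i _.
rewrite mulr_sumr; apply: eq_bigr => j _; by rewrite mxE mulr1.
Qed.

Lemma quadJ x : quad_form (const_mx 1) x = ones_dot x ^+ 2.
Proof. by rewrite quad_bil bilJ expr2. Qed.

Lemma quad_expand A x y r : A^T = A ->
  quad_form A (x + r *: y) = quad_form A x + 2 * r * bil A x y + r ^+ 2 * quad_form A y.
Proof.
move=> sA; rewrite !quad_bil bilDl !bilDr !bilZl !bilZr (bil_sym x y sA).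
ring.
Qed.

Lemma sqnorm_ge0 x : 0 <= sqnorm x.
Proof. by apply: sumr_ge0 => i _; rewrite sqr_ge0. Qed.

Lemma sqnorm_eq0 x : sqnorm x = 0 -> x = 0.
Proof.
move=> h; apply/matrixP => i j; rewrite (ord1 j) mxE.
have := psumr_eq0P (fun k _ => sqr_ge0 (x k 0)) h (isT : true) => /(_ i).
by move/eqP; rewrite sqrf_eq0 => /eqP.
Qed.

Lemma coord_le x i : x i 0 ^+ 2 <= sqnorm x.
Proof.
rewrite /sqnorm (bigD1 i) //= lerDl; apply: sumr_ge0 => k _; exact: sqr_ge0.
Qed.

Lemma quad_bound A x : quad_form A x <= (\sum_i \sum_j `|A i j|) * sqnorm x.
Proof.
rewrite quad_bil bilE mulr_suml; apply: ler_sum => i _.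
rewrite mulr_suml; apply: ler_sum => j _.
have h1 := coord_le x i; have h2 := coord_le x j.
have h3 : x i 0 * x j 0 <= sqnorm x.
  have : 0 <= (x i 0 - x j 0) ^+ 2 by apply: sqr_ge0.
  have : 0 <= (x i 0 + x j 0) ^+ 2 by apply: sqr_ge0.
  nra.
have h4 : - (x i 0 * x j 0) <= sqnorm x.
  have : 0 <= (x i 0 + x j 0) ^+ 2 by apply: sqr_ge0.
  nra.
have hA := ler_norm (A i j); have hA' := ler_normr (A i j).
have hA0 : 0 <= `|A i j| by [].
case: (lerP 0 (A i j)) => hs.
- have -> : `|A i j| = A i j by rewrite ger0_norm.
  rewrite [_ * A i j]mulrC -mulrA; nra.
- have -> : `|A i j| = - A i j by rewrite ltr0_norm.
  rewrite [_ * A i j]mulrC -mulrA; nra.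
Qed.


Lemma bil_delta A i j : bil A (delta_mx i 0) (delta_mx j 0) = A i j.
Proof. by rewrite /bil trmx_delta -rowE -colE !mxE. Qed.

Lemma sqnorm_delta i : sqnorm (delta_mx i 0 : 'cV[R]_n) = 1.
Proof. by rewrite sqnorm_dot -bil1 bil_delta mxE eqxx. Qed.

Lemma real_cs (a b c : R) : 0 <= c ->
  (forall r, 0 <= a + 2 * r * b + r ^+ 2 * c) -> b ^+ 2 <= a * c.
Proof.
move=> c0 h; have [c00|cn0] := eqVneq c 0.
  rewrite c00 in h *.
  have [->|bn0] := eqVneq b 0; first by rewrite expr0n /= mulr0.
  have := h (- (a + 1) / (2 * b)).
  have -> : a + 2 * (- (a + 1) / (2 * b)) * b + (- (a + 1) / (2 * b)) ^+ 2 * 0 = -1.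
    field; exact: bn0.
  by rewrite ler0N1.
have cp : 0 < c by rewrite lt_def cn0.
have := h (- b / c).
have -> : a + 2 * (- b / c) * b + (- b / c) ^+ 2 * c = (a * c - b ^+ 2) / c by field.
by rewrite pmulr_lge0 ?invr_gt0 // subr_ge0.
Qed.

Lemma cs_psd M x y : M^T = M -> (forall z, 0 <= quad_form M z) ->
  bil M x y ^+ 2 <= quad_form M x * quad_form M y.
Proof.
move=> sM psd; apply: real_cs => // r.
by rewrite -quad_expand.
Qed.

Lemma quad_trmx A x : quad_form A^T x = quad_form A x.
Proof.
rewrite /quad_form.
have h (M : 'M[R]_1) : M 0 0 = M^T 0 0 by rewrite mxE.
by rewrite [LHS]h !trmx_mul !trmxK mulmxA.
Qed.

Lemma psd_coercive M : M^T = M -> (forall z, 0 <= quad_form M z) ->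
  M \in unitmx -> exists2 d, 0 < d & forall x, d * sqnorm x <= quad_form M x.
Proof.
move=> sM psd Mu.
set N := invmx M.
set K := \sum_i \sum_j `|N^T i j| + 1.
have K0 : 0 < K.
  rewrite /K ltr_pwDr // sumr_ge0 // => i _; exact: sumr_ge0.
exists K^-1; first by rewrite invr_gt0.
move=> x; set y := N *m x.
have e1 : bil M x y = sqnorm x.
  by rewrite /bil -mulmxA mulKVmx // sqnorm_dot -bil1 /bil mulmx1.
have e2 : quad_form M y <= K * sqnorm x.
  have -> : quad_form M y = quad_form N^T x.
    by rewrite /quad_form -mulmxA mulKVmx // /y trmx_mul.
  apply: (le_trans (quad_bound N^T x)).
  by apply: ler_wpM2r; [exact: sqnorm_ge0| rewrite lerDl].
have cs := cs_psd x y sM psd.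
rewrite e1 in cs.
have q0 := psd x; have s0 := sqnorm_ge0 x.
have [->|sn0] := eqVneq (sqnorm x) 0; first by rewrite mulr0.
have sp : 0 < sqnorm x by rewrite lt_def sn0.
rewrite -(ler_pM2l K0) mulrA mulrV ?unitfE ?gt_eqF // mul1r.
rewrite -(ler_pM2r sp) -expr2.
apply: (le_trans cs).
rewrite [K * _]mulrC -mulrA; exact: ler_wpM2l.
Qed.
Lemma quad_sub (a : R) (B : 'M[R]_n) x :
  quad_form (a%:M - B) x = a * sqnorm x - quad_form B x.
Proof. by rewrite quad_bil bilMD bilMN -quad_bil quad_scalar. Qed.
End Alg.

Section Ray.
Variable R : realType.
Variable n : nat.


Lemma rayleigh (B : 'M[R]_n.+1) : B^T = B ->
  exists mu, eigenvalue B mu /\ forall x, quad_form B x <= mu * sqnorm x.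
Proof.
move=> sB.
pose S := [set l : R | forall x, quad_form B x <= l * sqnorm x].
have SK : S (\sum_i \sum_j `|B i j|) by move=> x; exact: quad_bound.
have lbS : lbound S (B 0 0).
  move=> l Sl; have := Sl (delta_mx 0 0).
  by rewrite quad_bil bil_delta sqnorm_delta mulr1.
have hlb : has_lbound S by exists (B 0 0).
have neS : S !=set0 by eexists; exact: SK.
set mu := inf S.
have Smu : S mu.
  move=> x; rewrite leNgt; apply/negP => hx.
  have sx : 0 < sqnorm x.
    rewrite lt_def sqnorm_ge0 andbT; apply/eqP => s0.
    move: hx; rewrite s0 (sqnorm_eq0 s0) mulr0 /quad_form.
    by rewrite mulmx0 mxE ltxx.
  have : lbound S (quad_form B x / sqnorm x).
    by move=> l Sl; rewrite ler_pdivrMr //; exact: Sl.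
  move/(lb_le_inf neS); rewrite -/mu => h.
  by move: hx; rewrite -ltr_pdivlMr // ltNge h.
have ev : eigenvalue B mu.
  set M := mu%:M - B.
  have sM : M^T = M by rewrite /M linearB /= tr_scalar_mx sB.
  have psd : forall z, 0 <= quad_form M z.
    by move=> z; rewrite quad_sub subr_ge0; exact: Smu.
  case: (boolP (M \in unitmx)) => Mu.
    have [d d0 hd] := psd_coercive sM psd Mu.
    have : S (mu - d).
      move=> x; have := hd x; rewrite /M quad_sub mulrBl; lra.
    move/(ge_inf hlb); rewrite -/mu; lra.
  rewrite /eigenvalue /eigenspace -mxrank_eq0 mxrank_ker.
  have -> : B - mu%:M = - M by rewrite opprB.
  rewrite mxrank_opp subn_eq0 -ltnNge.
  rewrite -row_free_unit /row_free in Mu.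
  by rewrite ltn_neqAle Mu rank_leq_row.
by exists mu.
Qed.
End Ray.

Section Lmax.
Variable R : realType.

Lemma eig_vec n (B : 'M[R]_n) a : B^T = B -> eigenvalue B a ->
  exists2 x : 'cV[R]_n, x != 0 & quad_form B x = a * sqnorm x.
Proof.
move=> sB /eigenvalueP [v vB vn0]; exists v^T; first by rewrite trmx_eq0.
by rewrite -quad_scalar /quad_form trmxK vB mul_mx_scalar.
Qed.

Lemma sqnorm_gt0 n (x : 'cV[R]_n) : x != 0 -> 0 < sqnorm x.
Proof.
move=> xn0; rewrite lt_def sqnorm_ge0 andbT; apply/eqP => /sqnorm_eq0 x0.
by rewrite x0 eqxx in xn0.
Qed.

Lemma lmax0 (B : 'M[R]_0) : lambda_max B = 0.
Proof.
rewrite /lambda_max (_ : [set a | eigenvalue B a] = set0) ?sup0 //.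
by apply/seteqP; split => a //=; rewrite /eigenvalue thinmx0 eqxx.
Qed.

Lemma lmax_spec n (B : 'M[R]_n) : B^T = B ->
  (forall x, quad_form B x <= lambda_max B * sqnorm x) /\
  (forall a, eigenvalue B a -> a <= lambda_max B).
Proof.
move=> sB; case: n B sB => [|n] B sB.
  split => [x|a]; last by rewrite /eigenvalue thinmx0 eqxx.
  by rewrite quad_bil bilE big_ord0 /sqnorm big_ord0 mulr0.
have [mu [ev hmu]] := rayleigh sB.
have ub : forall a, eigenvalue B a -> a <= mu.
  move=> a /(eig_vec sB) [x xn0 qx].
  have := hmu x; rewrite qx ler_pM2r //; exact: sqnorm_gt0.
have -> : lambda_max B = mu.
  apply/le_anti/andP; split.
    by apply: ge_sup; [exists mu | move=> a]; [exact: ev | exact: ub].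
  by apply: ub_le_sup => //; exists mu => a; exact: ub.
by split.
Qed.

End Lmax.

Section Finsler.
Variable R : realType.

Lemma real_pair (qx qb qy px pb py : R) : 0 < qx -> qy < 0 ->
  (forall r, qx + 2 * r * qb + r ^+ 2 * qy = 0 -> 0 <= px + 2 * r * pb + r ^+ 2 * py) ->
  0 <= px * (- qy) + py * qx.
Proof.
move=> qx0 qy0 H.
set D := qb ^+ 2 - qx * qy.
have D0 : 0 < D by rewrite /D; nra.
set sq := Num.sqrt D.
have sq0 : 0 < sq by rewrite sqrtr_gt0.
have sq2 : sq ^+ 2 = D by rewrite sqr_sqrtr // ltW.
have sqb : `|qb| < sq.
  rewrite -(ltr_pXn2r (isT : (0 < 2)%N)) ?nnegrE ?normr_ge0 ?ltW //.
  by rewrite sq2 real_normK ?num_real // /D; nra.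
have hqb := ler_norm qb; have hqb' := ler_normr qb.
have hqb2 : - qb <= `|qb| by rewrite -normrN ler_norm.
set u1 := - qb + sq; set u2 := - qb - sq.
have u10 : 0 < u1 by rewrite /u1; lra.
have u20 : u2 < 0 by rewrite /u2; lra.
have qyn0 : qy != 0 by rewrite lt_eqF.
have g (u : R) : u ^+ 2 + 2 * u * qb + qx * qy = 0 ->
    0 <= qy ^+ 2 * px + 2 * u * qy * pb + u ^+ 2 * py.
  move=> hu; have := H (u / qy).
  have -> : qx + 2 * (u / qy) * qb + (u / qy) ^+ 2 * qy =
            (u ^+ 2 + 2 * u * qb + qx * qy) / qy by field.
  rewrite hu mul0r => /(_ erefl) h.
  have -> : qy ^+ 2 * px + 2 * u * qy * pb + u ^+ 2 * py =
     qy ^+ 2 * (px + 2 * (u / qy) * pb + (u / qy) ^+ 2 * py) by field.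
  by apply: mulr_ge0 => //; exact: sqr_ge0.
have g1 : 0 <= qy ^+ 2 * px + 2 * u1 * qy * pb + u1 ^+ 2 * py.
  apply: g; rewrite /u1.
  have -> : (- qb + sq) ^+ 2 + 2 * (- qb + sq) * qb + qx * qy = sq ^+ 2 - D.
    by rewrite /D; ring.
  by rewrite sq2 subrr.
have g2 : 0 <= qy ^+ 2 * px + 2 * u2 * qy * pb + u2 ^+ 2 * py.
  apply: g; rewrite /u2.
  have -> : (- qb - sq) ^+ 2 + 2 * (- qb - sq) * qb + qx * qy = sq ^+ 2 - D.
    by rewrite /D; ring.
  by rewrite sq2 subrr.
have key : 0 <= (- u2) * (qy ^+ 2 * px + 2 * u1 * qy * pb + u1 ^+ 2 * py)
                + u1 * (qy ^+ 2 * px + 2 * u2 * qy * pb + u2 ^+ 2 * py).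
  apply: addr_ge0; apply: mulr_ge0 => //; lra.
have e : u1 * u2 = qx * qy.
  rewrite /u1 /u2.
  have -> : (- qb + sq) * (- qb - sq) = qb ^+ 2 - sq ^+ 2 by ring.
  by rewrite sq2 /D; ring.
have e2 : u1 - u2 = 2 * sq by rewrite /u1 /u2; ring.
have e3 : (- u2) * (qy ^+ 2 * px + 2 * u1 * qy * pb + u1 ^+ 2 * py)
        + u1 * (qy ^+ 2 * px + 2 * u2 * qy * pb + u2 ^+ 2 * py)
        = (u1 - u2) * (qy ^+ 2 * px - (u1 * u2) * py) by ring.
rewrite e3 e e2 in key.
have -> : px * - qy + py * qx = (qy ^+ 2 * px - qx * qy * py) / (- qy) by field.
apply: divr_ge0; last by lra.
have p : 0 < 2 * sq by lra.
by rewrite pmulr_rge0 in key.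
Qed.

Lemma pairwise n (P Q : 'M[R]_n) x y : P^T = P -> Q^T = Q ->
  (forall z, quad_form Q z = 0 -> 0 <= quad_form P z) ->
  0 < quad_form Q x -> quad_form Q y < 0 ->
  0 <= quad_form P x * (- quad_form Q y) + quad_form P y * quad_form Q x.
Proof.
move=> sP sQ H qx qy.
apply: (@real_pair _ (bil Q x y) _ _ (bil P x y)) => // r hr.
have := H (x + r *: y); rewrite !quad_expand // hr; exact.
Qed.

Lemma finsler n (P Q : 'M[R]_n) : P^T = P -> Q^T = Q ->
  (forall z, quad_form Q z = 0 -> 0 <= quad_form P z) ->
  (exists x, 0 < quad_form Q x) -> (exists y, quad_form Q y < 0) ->
  exists t, forall x, 0 <= quad_form P x + t * quad_form Q x.
Proof.
move=> sP sQ H [x0 hx0] [y0 hy0].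
pose L := [set - quad_form P x / quad_form Q x | x in [set x | 0 < quad_form Q x]].
have Lub : forall y, quad_form Q y < 0 -> ubound L (quad_form P y / (- quad_form Q y)).
  move=> y hy _ [x hx <-].
  have := pairwise sP sQ H hx hy.
  have hy' : 0 < - quad_form Q y by rewrite oppr_gt0.
  move=> h; rewrite ler_pdivlMr // mulrAC ler_pdivrMr //; lra.
have hub : has_ubound L by eexists; exact: Lub y0 hy0.
have neL : L !=set0 by exists (- quad_form P x0 / quad_form Q x0); exists x0.
exists (sup L) => x.
have [hx|hx|hx] := ltgtP (quad_form Q x) 0.
- have hx' : 0 < - quad_form Q x by rewrite oppr_gt0.
  have := ge_sup neL (Lub x hx).
  rewrite ler_pdivlMr // => h; lra.
- have : L (- quad_form P x / quad_form Q x) by exists x.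
  move/(ub_le_sup hub); rewrite ler_pdivrMr // => h; lra.
- by rewrite hx mulr0 addr0; apply: H.
Qed.

End Finsler.

Section Main.
Variable R : realType.
Variable n : nat.
Variable adj : rel 'I_n.
Implicit Types (A B : 'M[R]_n) (v x z : 'cV[R]_n).

Definition J : 'M[R]_n := const_mx 1.

Lemma J_sym : J^T = J. Proof. by rewrite /J trmx_const. Qed.

Lemma sph_bound v : sphereS v -> sqnorm v <= n%:R.
Proof.
rewrite /sphereS /= => e.
have h : \sum_i (2 * v i 0) <= \sum_i (v i 0 ^+ 2 + 1).
  apply: ler_sum => i _; have := sqr_ge0 (v i 0 - 1); nra.
rewrite big_split /= -mulr_sumr sumr_const card_ord -/(sqnorm v) in h.
rewrite -/(ones_dot v) e in h.
move: h; rewrite -[(1 : R) *+ n]mulr_natr mul1r; lra.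
Qed.

Definition SV A := [set sqnorm v | v in [set v | sphereS v /\ quad_form A v = 0]].

Lemma SV_ub A : has_ubound (SV A).
Proof. by exists n%:R => _ [v [hv _] <-]; exact: sph_bound. Qed.

Lemma SV_le A v : sphereS v -> quad_form A v = 0 -> sqnorm v <= sph_value A.
Proof. by move=> h1 h2; apply: ub_le_sup; [exact: SV_ub | exists v]. Qed.

Lemma sph_value_ge0 A : 0 <= sph_value A.
Proof.
have := @SV_le A 0; rewrite /sqnorm big1 => [|i _]; last by rewrite mxE expr0n.
apply.
  by rewrite /sphereS /= /ones_dot /sqnorm !big1 // => i _; rewrite mxE ?expr0n.
by rewrite /quad_form mulmx0 mxE.
Qed.

Lemma ones_dotZ a x : ones_dot (a *: x) = a * ones_dot x.
Proof. by rewrite /ones_dot mulr_sumr; apply: eq_bigr => i _; rewrite mxE. Qed.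

Lemma sqnormZ a x : sqnorm (a *: x) = a ^+ 2 * sqnorm x.
Proof. by rewrite /sqnorm mulr_sumr; apply: eq_bigr => i _; rewrite mxE exprMn. Qed.

Lemma quadZ A a x : quad_form A (a *: x) = a ^+ 2 * quad_form A x.
Proof. by rewrite !quad_bil bilZl bilZr mulrA expr2. Qed.

Lemma key_hyp A z : quad_form A z = 0 -> ones_dot z ^+ 2 <= sph_value A * sqnorm z.
Proof.
move=> qz.
have s0 := sph_value_ge0 A; have q0 := sqnorm_ge0 z.
have [o0|on0] := eqVneq (ones_dot z) 0.
  by rewrite o0 expr0n /= mulr_ge0.
have zn0 : z != 0.
  by apply: contraNneq on0 => ->; rewrite /ones_dot big1 // => i _; rewrite mxE.
have sp := sqnorm_gt0 zn0.
have spn : sqnorm z != 0 by rewrite gt_eqF.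
set lam := ones_dot z / sqnorm z.
have := @SV_le A (lam *: z).
rewrite sqnormZ quadZ qz mulr0 /sphereS /= ones_dotZ sqnormZ.
have -> : lam * ones_dot z = lam ^+ 2 * sqnorm z by rewrite /lam; field.
move=> /(_ erefl erefl).
have -> : lam ^+ 2 * sqnorm z = ones_dot z ^+ 2 / sqnorm z by rewrite /lam; field.
by rewrite ler_pdivrMr.
Qed.

Lemma adm_sym B : theta_admissible adj B -> B^T = B.
Proof. by case. Qed.

Lemma lmax_adm_ge0 B : theta_admissible adj B -> 0 <= lambda_max B.
Proof.
move=> hB; have sB := adm_sym hB.
case: n B adj hB sB => [|m] B ad hB sB; first by rewrite lmax0.
have [h _] := lmax_spec sB.
have := h (delta_mx 0 0); rewrite quad_bil bil_delta sqnorm_delta mulr1.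
by case: hB => _ ->; rewrite ?eqxx // => /(le_trans ler01).
Qed.

Lemma dir1 B : theta_admissible adj B -> sph_value (B - J) <= lambda_max B.
Proof.
move=> hB; have sB := adm_sym hB; have [h _] := lmax_spec sB.
have l0 := lmax_adm_ge0 hB.
apply: ge_sup.
  exists 0, 0; last by rewrite /sqnorm big1 // => i _; rewrite mxE expr0n.
  split; first by rewrite /sphereS /= /ones_dot /sqnorm !big1 // => i _; rewrite mxE ?expr0n.
  by rewrite /quad_form mulmx0 mxE.
move=> _ [v [sv qv] <-].
move: qv; rewrite quad_bil bilMD bilMN -!quad_bil quadJ => /eqP; rewrite subr_eq0 => /eqP qB.
have := h v; rewrite qB; move: sv; rewrite /sphereS /= => ->.
have [->|vn0] := eqVneq v 0.
  by rewrite /sqnorm big1 // => i _; rewrite mxE expr0n.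
have sp := sqnorm_gt0 vn0.
by rewrite expr2 ler_pM2r.
Qed.

Lemma adm_wadj B : theta_admissible adj B -> weighted_adj adj (B - J).
Proof.
case=> sB hB; split; first by rewrite /symmetric_mx linearB /= sB J_sym.
split; first by move=> i; rewrite !mxE hB ?eqxx ?subrr.
by move=> i j ij nij; rewrite !mxE hB ?nij ?orbT ?subrr.
Qed.

Lemma J_adm : theta_admissible adj J.
Proof. by split; [exact: J_sym | move=> i j _; rewrite mxE]. Qed.

Lemma dir2 A : weighted_adj adj A ->
  exists2 B, theta_admissible adj B & lambda_max B <= sph_value A.
Proof.
case=> sA [dA oA]; set s := sph_value A.
have s0 : 0 <= s := sph_value_ge0 A.
set P := s%:M - J.
have sP : P^T = P by rewrite /P linearB /= tr_scalar_mx J_sym.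
have qP x : quad_form P x = s * sqnorm x - ones_dot x ^+ 2 by rewrite /P quad_sub quadJ.
have H z : quad_form A z = 0 -> 0 <= quad_form P z.
  by move=> /key_hyp; rewrite qP subr_ge0.
have [t ht] : exists t, forall x, 0 <= quad_form P x + t * quad_form A x.
  have [[i [j hij]]|nall] := pselect (exists i j, A i j != 0); last first.
    exists 0 => x; rewrite mul0r addr0; apply: H.
    have -> : A = 0.
      apply/matrixP => i j; rewrite mxE; have [//|hn] := eqVneq (A i j) 0.
      by exfalso; apply: nall; exists i, j.
    by rewrite /quad_form mulmx0 mul0mx mxE.
  have qe (r : R) : quad_form A (delta_mx i 0 + r *: delta_mx j 0) = 2 * r * A i j.
    by rewrite quad_expand // !quad_bil !bil_delta !dA mulr0 !addr0 add0r.
  have q1 := qe 1; have q2 := qe (-1).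
  apply: finsler => //.
  - have [hp|hn] := ltP 0 (A i j).
      by exists (delta_mx i 0 + 1 *: delta_mx j 0); rewrite q1; lra.
    have hn' : A i j < 0 by rewrite lt_neqAle hij hn.
    by exists (delta_mx i 0 + (-1) *: delta_mx j 0); rewrite q2; lra.
  - have [hp|hn] := ltP 0 (A i j).
      by exists (delta_mx i 0 + (-1) *: delta_mx j 0); rewrite q2; lra.
    have hn' : A i j < 0 by rewrite lt_neqAle hij hn.
    by exists (delta_mx i 0 + 1 *: delta_mx j 0); rewrite q1; lra.
set B := J + (- t) *: A.
have sB : B^T = B by rewrite /B linearD linearZ /= J_sym sA.
exists B.
  split => // i j hij; rewrite !mxE.
  case/orP: hij => [/eqP ->|nij]; first by rewrite dA mulr0 addr0.
  have [->|ij] := eqVneq i j; first by rewrite dA mulr0 addr0.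
  by rewrite oA // mulr0 addr0.
have qB x : quad_form B x <= s * sqnorm x.
  have := ht x; rewrite qP /B (quad_bil (J + _)) bilMD bilMZ -!quad_bil quadJ; lra.
rewrite /lambda_max.
have [ne|nne] := pselect ([set a | eigenvalue B a] !=set0); last first.
  by rewrite sup_out // => -[].
apply: ge_sup => // a /= /(eig_vec sB) [x xn0 qx].
have := qB x; rewrite qx ler_pM2r //; exact: sqnorm_gt0.
Qed.

End Main.

Theorem lemma1 (R : realType) (n : nat) (adj : rel 'I_n) :
  simple_graph adj -> lovasz_theta R adj = spherical_indep R adj.
Proof.
move=> _; rewrite /lovasz_theta /spherical_indep.
set TS := [set lambda_max B | B in [set B : 'M[R]_n | theta_admissible adj B]].
set AS := [set sph_value A | A in [set A : 'M[R]_n | weighted_adj adj A]].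
have TSlb : has_lbound TS by exists 0 => _ [B hB <-]; exact: lmax_adm_ge0 hB.
have ASlb : has_lbound AS by exists 0 => _ [A _ <-]; exact: sph_value_ge0.
have TSne : TS !=set0 by exists (lambda_max (J R n)), (J R n) => //; exact: J_adm.
have ASne : AS !=set0.
  exists (sph_value (0 : 'M[R]_n)), 0 => //.
  split; first by rewrite /symmetric_mx trmx0.
  by split => [i|i j _ _]; rewrite mxE.
apply/le_anti/andP; split.
- apply: lb_le_inf ASne _ => _ [A hA <-].
  have [B hB hl] := dir2 hA.
  apply: le_trans hl; apply: ge_inf TSlb _ _; by exists B.
- apply: lb_le_inf TSne _ => _ [B hB <-].
  apply: le_trans (dir1 hB); apply: ge_inf ASlb _ _.
  by exists (B - J R n) => //; exact: adm_wadj.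
Qed.
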